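(* Let $\mathbb{X}$ be a real or complex Banach algebra with identity, $\mathcal{G}$ its group of units, and $g_n:\mathbb{X}\to\mathbb{X}$ ($n\ge0$) arbitrary functions. Let $b\in\mathcal{G}$ with $|b|<1$ and $a_0,a_1\in\mathbb{X}$ with $a_0b+a_1=b^2$. Consider $$x_{n+1}=a_0x_n+a_1x_{n-1}+g_n(x_n-bx_{n-1}),\quad n\ge0. \tag{S}$$ If $x_0,x_{-1}\in\mathbb{X}$ are initial values such that the solution of the first-order equation $$t_{n+1}=(a_0-b)t_n+g_n(t_n),\quad n\ge0,$$ with initial value $t_0=x_0-bx_{-1}$ converges to $0$, then the solution of (S) with initial values $x_0,x_{-1}$ converges to $0$. In particular, if $0$ attracts all solutions of the first-order equation, then $0$ attracts all solutions of (S).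
   Context: A Banach algebra with identity is a Banach space $\mathbb{X}$ (norm $|\cdot|$) with an associative bilinear multiplication satisfying $|xy|\le|x||y|$ and identity $1$ with $|1|=1$; $\mathcal{G}$ is the set of invertible elements. Convergence is in norm. *)

(* Defs.v *)
From Stdlib Require Import Reals Lra.
Open Scope R_scope.

(* A real Banach algebra with identity (a complex Banach algebra is in
   particular a real one by restriction of scalars). *)
Record BanachAlgebra := {
  ba_car :> Type;
  ba_zero : ba_car;
  ba_one : ba_car;
  ba_add : ba_car -> ba_car -> ba_car;
  ba_opp : ba_car -> ba_car;
  ba_mul : ba_car -> ba_car -> ba_car;
  ba_scal : R -> ba_car -> ba_car;
  ba_norm : ba_car -> R;
  ba_addA : forall x y z, ba_add x (ba_add y z) = ba_add (ba_add x y) z;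
  ba_addC : forall x y, ba_add x y = ba_add y x;
  ba_add0 : forall x, ba_add x ba_zero = x;
  ba_addN : forall x, ba_add x (ba_opp x) = ba_zero;
  ba_scal1 : forall x, ba_scal 1 x = x;
  ba_scalA : forall r s x, ba_scal r (ba_scal s x) = ba_scal (r * s) x;
  ba_scalDr : forall r x y, ba_scal r (ba_add x y) = ba_add (ba_scal r x) (ba_scal r y);
  ba_scalDl : forall r s x, ba_scal (r + s) x = ba_add (ba_scal r x) (ba_scal s x);
  ba_mulA : forall x y z, ba_mul x (ba_mul y z) = ba_mul (ba_mul x y) z;
  ba_mul1l : forall x, ba_mul ba_one x = x;
  ba_mul1r : forall x, ba_mul x ba_one = x;
  ba_mulDl : forall x y z, ba_mul (ba_add x y) z = ba_add (ba_mul x z) (ba_mul y z);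
  ba_mulDr : forall x y z, ba_mul x (ba_add y z) = ba_add (ba_mul x y) (ba_mul x z);
  ba_scal_mull : forall r x y, ba_mul (ba_scal r x) y = ba_scal r (ba_mul x y);
  ba_scal_mulr : forall r x y, ba_mul x (ba_scal r y) = ba_scal r (ba_mul x y);
  ba_norm_ge0 : forall x, 0 <= ba_norm x;
  ba_norm_eq0 : forall x, ba_norm x = 0 -> x = ba_zero;
  ba_norm_triangle : forall x y, ba_norm (ba_add x y) <= ba_norm x + ba_norm y;
  ba_norm_scal : forall r x, ba_norm (ba_scal r x) = Rabs r * ba_norm x;
  ba_norm_mul : forall x y, ba_norm (ba_mul x y) <= ba_norm x * ba_norm y;
  ba_norm_one : ba_norm ba_one = 1;
  ba_complete : forall u : nat -> ba_car,
    (forall eps, 0 < eps -> exists N, forall m n, (N <= m)%nat -> (N <= n)%nat ->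
        ba_norm (ba_add (u m) (ba_opp (u n))) < eps) ->
    exists l, forall eps, 0 < eps -> exists N, forall n, (N <= n)%nat ->
        ba_norm (ba_add (u n) (ba_opp l)) < eps
}.

Arguments ba_zero {_}. Arguments ba_one {_}. Arguments ba_add {_}.
Arguments ba_opp {_}. Arguments ba_mul {_}. Arguments ba_scal {_}.
Arguments ba_norm {_}.

Definition ba_sub {X : BanachAlgebra} (x y : X) : X := ba_add x (ba_opp y).

Definition invertible {X : BanachAlgebra} (b : X) : Prop :=
  exists c : X, ba_mul b c = ba_one /\ ba_mul c b = ba_one.

Definition conv0 {X : BanachAlgebra} (u : nat -> X) : Prop :=
  forall eps, 0 < eps -> exists N, forall n, (N <= n)%nat -> ba_norm (u n) < eps.

Definition first_order_sol {X : BanachAlgebra} (a0 b : X) (g : nat -> X -> X)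
  (t : nat -> X) : Prop :=
  forall n, t (S n) = ba_add (ba_mul (ba_sub a0 b) (t n)) (g n (t n)).

(* y solves (S) with the index shift y k = x_{k-1}, k >= 0:
   x_{n+1} = a0 x_n + a1 x_{n-1} + g_n(x_n - b x_{n-1}) *)
Definition S_sol {X : BanachAlgebra} (a0 a1 b : X) (g : nat -> X -> X)
  (y : nat -> X) : Prop :=
  forall n, y (S (S n)) =
    ba_add (ba_add (ba_mul a0 (y (S n))) (ba_mul a1 (y n)))
           (g n (ba_sub (y (S n)) (ba_mul b (y n)))).

(* Main.v *)
Require Import Defs.
From Stdlib Require Import Reals Lra Lia.
Open Scope R_scope.

Section Alg.
Variable X : BanachAlgebra.
Implicit Types x y z : X.

Lemma add0l x : ba_add ba_zero x = x.
Proof. rewrite ba_addC. apply ba_add0. Qed.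

Lemma opp_uniq x y : ba_add x y = ba_zero -> y = ba_opp x.
Proof.
  intro H. rewrite <- (ba_add0 X y), <- (ba_addN X x), ba_addA.
  rewrite (ba_addC X y x), H. apply add0l.
Qed.

Lemma cancel0 x y : ba_add x y = x -> y = ba_zero.
Proof.
  intro H. transitivity (ba_add (ba_add (ba_opp x) x) y).
  - rewrite (ba_addC X (ba_opp x)), ba_addN. symmetry. apply add0l.
  - rewrite <- ba_addA, H, ba_addC. apply ba_addN.
Qed.

Lemma mul0l x : ba_mul ba_zero x = ba_zero.
Proof.
  apply (cancel0 (ba_mul ba_zero x)). rewrite <- ba_mulDl, ba_add0. reflexivity.
Qed.

Lemma mul0r x : ba_mul x ba_zero = ba_zero.
Proof.
  apply (cancel0 (ba_mul x ba_zero)). rewrite <- ba_mulDr, ba_add0. reflexivity.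
Qed.

Lemma mul_oppl x y : ba_mul (ba_opp x) y = ba_opp (ba_mul x y).
Proof. apply opp_uniq. rewrite <- ba_mulDl, ba_addN. apply mul0l. Qed.

Lemma mul_oppr x y : ba_mul x (ba_opp y) = ba_opp (ba_mul x y).
Proof. apply opp_uniq. rewrite <- ba_mulDr, ba_addN. apply mul0r. Qed.

Lemma opp_opp x : ba_opp (ba_opp x) = x.
Proof. symmetry. apply opp_uniq. rewrite ba_addC. apply ba_addN. Qed.

Lemma key (a0 a1 b Y1 Y0 G : X) :
  ba_add (ba_mul a0 b) a1 = ba_mul b b ->
  ba_sub (ba_add (ba_add (ba_mul a0 Y1) (ba_mul a1 Y0)) G) (ba_mul b Y1)
  = ba_add (ba_mul (ba_sub a0 b) (ba_sub Y1 (ba_mul b Y0))) G.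
Proof.
  intro Ha.
  assert (Ha1 : ba_mul a1 Y0 = ba_add (ba_mul (ba_mul b b) Y0)
                   (ba_opp (ba_mul (ba_mul a0 b) Y0))).
  { rewrite <- Ha, ba_mulDl. rewrite (ba_addC X (ba_mul (ba_mul a0 b) Y0)).
    rewrite <- ba_addA, ba_addN, ba_add0. reflexivity. }
  unfold ba_sub. rewrite Ha1.
  rewrite ba_mulDl, !ba_mulDr, !mul_oppl, !mul_oppr, opp_opp, !ba_mulA.
  set (A := ba_mul a0 Y1). set (B := ba_mul b Y1).
  set (C := ba_mul (ba_mul a0 b) Y0). set (D := ba_mul (ba_mul b b) Y0).
  (* ((A + (D + -C)) + G) + -B = ((A + -C) + (-B + D)) + G *)
  rewrite <- !ba_addA. f_equal. rewrite ba_addA, (ba_addC X D (ba_opp C)), <- ba_addA. f_equal.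
  rewrite (ba_addC X G (ba_opp B)), ba_addA, (ba_addC X D (ba_opp B)), <- ba_addA.
  reflexivity.
Qed.

Lemma recover (y1 y0 t : X) : t = ba_sub y1 y0 -> y1 = ba_add t y0.
Proof.
  intro H. rewrite H. unfold ba_sub. rewrite <- ba_addA, (ba_addC X (ba_opp y0)).
  rewrite ba_addN, ba_add0. reflexivity.
Qed.

End Alg.

Lemma real_lemma (u v : nat -> R) (q : R) :
  0 <= q < 1 -> (forall n, 0 <= u n) ->
  (forall n, u (S n) <= q * u n + v n) ->
  (forall eps, 0 < eps -> exists N, forall n, (N <= n)%nat -> v n < eps) ->
  forall eps, 0 < eps -> exists N, forall n, (N <= n)%nat -> u n < eps.
Proof.
  intros [q0 q1] u0 Hu Hv eps Heps.
  destruct (Hv (eps * (1 - q) / 2)) as [N1 HN1].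
  { apply Rmult_lt_0_compat; [apply Rmult_lt_0_compat|]; lra. }
  set (M := u N1).
  assert (Hk : forall k, u (N1 + k)%nat <= q ^ k * M + eps / 2).
  { induction k.
    - rewrite Nat.add_0_r. simpl. unfold M. lra.
    - rewrite Nat.add_succ_r. eapply Rle_trans; [apply Hu|].
      assert (v (N1 + k)%nat < eps * (1 - q) / 2) by (apply HN1; lia).
      assert (q * u (N1 + k)%nat <= q * (q ^ k * M + eps / 2))
        by (apply Rmult_le_compat_l; lra).
      simpl. nra. }
  assert (M0 : 0 <= M) by apply u0.
  destruct (pow_lt_1_zero q ltac:(rewrite Rabs_right; lra) (eps / 2 / (M + 1)))
    as [N2 HN2].
  { apply Rdiv_lt_0_compat; lra. }
  exists (N1 + N2)%nat. intros n Hn.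
  replace n with (N1 + (n - N1))%nat by lia.
  eapply Rle_lt_trans; [apply Hk|].
  specialize (HN2 (n - N1)%nat ltac:(lia)).
  assert (0 <= q ^ (n - N1)) by (apply pow_le; lra).
  rewrite Rabs_right in HN2 by lra.
  assert (q ^ (n - N1) * (M + 1) < eps / 2).
  { apply (Rmult_lt_compat_r (M + 1)) in HN2; [|lra].
    unfold Rdiv in HN2 at 1. rewrite Rmult_assoc, Rinv_l in HN2 by lra. lra. }
  nra.
Qed.

Lemma conv_from_t (X : BanachAlgebra) (b : X) (y t : nat -> X) :
  ba_norm b < 1 ->
  (forall n, t n = ba_sub (y (S n)) (ba_mul b (y n))) -> conv0 t -> conv0 y.
Proof.
  intros Hb Ht Hc. unfold conv0.
  apply (real_lemma (fun n => ba_norm (y n)) (fun n => ba_norm (t n)) (ba_norm b)).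
  - split; [apply ba_norm_ge0|exact Hb].
  - intro; apply ba_norm_ge0.
  - intro n. rewrite (recover X _ _ _ (Ht n)).
    eapply Rle_trans; [apply ba_norm_triangle|].
    pose proof (ba_norm_mul X b (y n)). lra.
  - exact Hc.
Qed.

Theorem theorem2 (X : BanachAlgebra) (g : nat -> X -> X) (b a0 a1 : X)
  (Hb : invertible b) (Hbn : ba_norm b < 1)
  (Ha : ba_add (ba_mul a0 b) a1 = ba_mul b b) :
  (forall (x0 xm1 : X) (t y : nat -> X),
     t 0%nat = ba_sub x0 (ba_mul b xm1) -> first_order_sol a0 b g t ->
     y 0%nat = xm1 -> y 1%nat = x0 -> S_sol a0 a1 b g y ->
     conv0 t -> conv0 y)
  /\
  ((forall t : nat -> X, first_order_sol a0 b g t -> conv0 t) ->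
   forall y : nat -> X, S_sol a0 a1 b g y -> conv0 y).
Proof.
  split.
  - intros x0 xm1 t y Ht0 Ht Hy0 Hy1 Hy Hc.
    apply (conv_from_t X b y t Hbn); [|exact Hc].
    induction n.
    + rewrite Ht0, Hy0, Hy1. reflexivity.
    + rewrite Ht, IHn, Hy. symmetry. apply key. exact Ha.
  - intros Hall y Hy.
    apply (conv_from_t X b y (fun n => ba_sub (y (S n)) (ba_mul b (y n))) Hbn).
    + reflexivity.
    + apply Hall. intro n. rewrite Hy. apply key. exact Ha.
Qed.
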